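(* Let $q=2^h$, let $A,B,C,D\in\mathbb F_{q^4}$ with $B\ne 0$ and $B^{q^2}=1/B$, and let $$\Lambda=\{(u,v)\in\mathbb F_{q^4}^2 : v^{q^2}+Au+Bv+u^q=0,\ v^{q^2}+u^{q^2}+v^q+Cu+Dv=0\}.$$ Then $\#\Lambda\le q^3$. *)

(* Defs.v *)
From mathcomp Require Import all_boot all_algebra all_field.
Set Implicit Arguments. Unset Strict Implicit. Unset Printing Implicit Defensive.
Import GRing.Theory.
Local Open Scope ring_scope.

Definition Lambda (F : finFieldType) (q : nat) (A B C D : F) : {set F * F} :=
  [set uv : F * F |
     (uv.2 ^+ (q ^ 2)%N + A * uv.1 + B * uv.2 + uv.1 ^+ q == 0) &&
     (uv.2 ^+ (q ^ 2)%N + uv.1 ^+ (q ^ 2)%N + uv.2 ^+ q + C * uv.1 + D * uv.2 == 0)].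

(* Main.v *)
Require Import Defs.
From mathcomp Require Import all_boot all_algebra all_field.
From mathcomp Require Import ring.
Import GRing.Theory.
Local Open Scope ring_scope.

Lemma linc (F : fieldType) (X L1 L2 L3 L4 k1 k2 k3 k4 : F) :
  L1 = 0 -> L2 = 0 -> L3 = 0 -> L4 = 0 ->
  X = k1 * L1 + k2 * L2 + k3 * L3 + k4 * L4 -> X = 0.
Proof. by move=> -> -> -> -> ->; rewrite !mulr0 !addr0. Qed.
Arguments linc {F X L1 L2 L3 L4 k1 k2 k3 k4}.

Lemma addC2 (F : fieldType) (h2c : 2 \in [pchar F]) (x y : F) : x + y = 0 -> x = y.
Proof. by move/eqP; rewrite addr_eq0 (oppr_pchar2 h2c) => /eqP. Qed.
Arguments addC2 {F} h2c {x y}.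

Lemma roots_card (F : finFieldType) (p : {poly F}) (n : nat) :
  p != 0 -> (size p <= n.+1)%N -> (#|[set x | root p x]| <= n)%N.
Proof.
move=> p0 sp.
have hall : all (root p) (enum [set x | root p x]).
  by apply/allP => x; rewrite mem_enum inE.
have := max_poly_roots p0 hall (enum_uniq _); rewrite -cardE => hlt.
by rewrite -ltnS; apply: leq_trans hlt sp.
Qed.

Lemma rootsA (F : finFieldType) (n0 n1 n2 n3 : nat) (c0 c1 c2 c3 : F) :
  (n0 < n3)%N -> (n1 < n3)%N -> (n2 < n3)%N -> c3 != 0 ->
  (#|[set x : F | (c3 * x ^+ n3 + c2 * x ^+ n2 + c1 * x ^+ n1 + c0 * x ^+ n0 == 0)%R]| <= n3)%N.
Proof.
move=> h0 h1 h2 c30.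
pose p : {poly F} := c3 *: 'X^n3 + c2 *: 'X^n2 + c1 *: 'X^n1 + c0 *: 'X^n0.
have cp j : p`_j = c3 * (j == n3)%:R + c2 * (j == n2)%:R + c1 * (j == n1)%:R + c0 * (j == n0)%:R.
  by rewrite /p !coefD !coefZ !coefXn.
have p0 : p != 0.
  apply/eqP => /(congr1 (fun r : {poly F} => r`_n3)).
  rewrite cp coef0 eqxx (gtn_eqF h0) (gtn_eqF h1) (gtn_eqF h2) !mulr0 !addr0 mulr1.
  by move/eqP; rewrite (negbTE c30).
have sp : (size p <= n3.+1)%N.
  apply/leq_sizeP => j hj; rewrite cp.
  rewrite (gtn_eqF hj) (gtn_eqF (ltn_trans h0 hj)) (gtn_eqF (ltn_trans h1 hj)).
  by rewrite (gtn_eqF (ltn_trans h2 hj)) !mulr0 !addr0.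
have -> : [set x : F | c3 * x ^+ n3 + c2 * x ^+ n2 + c1 * x ^+ n1 + c0 * x ^+ n0 == 0]
    = [set x | root p x].
  by apply/setP => x; rewrite !inE /root /p !hornerE.
exact: roots_card p0 sp.
Qed.

Lemma rootsB (F : finFieldType) (n0 n1 n2 : nat) (c0 c1 c2 : F) :
  (n0 < n1)%N -> (n1 < n2)%N -> ~~ [&& c0 == 0, c1 == 0 & c2 == 0] ->
  (#|[set x : F | (c2 * x ^+ n2 + c1 * x ^+ n1 + c0 * x ^+ n0 == 0)%R]| <= n2)%N.
Proof.
move=> h01 h12 nz.
have h02 := ltn_trans h01 h12.
pose p : {poly F} := c2 *: 'X^n2 + c1 *: 'X^n1 + c0 *: 'X^n0.
have cp j : p`_j = c2 * (j == n2)%:R + c1 * (j == n1)%:R + c0 * (j == n0)%:R.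
  by rewrite /p !coefD !coefZ !coefXn.
have p0 : p != 0.
  apply: contra nz => /eqP p0.
  have := cp n2; have := cp n1; have := cp n0; rewrite p0 !coef0.
  rewrite !eqxx (gtn_eqF h12) (gtn_eqF h02) (gtn_eqF h01).
  rewrite (ltn_eqF h01) (ltn_eqF h12) (ltn_eqF h02).
  rewrite !mulr0 !mulr1 !addr0 !add0r.
  by move=> e0 e1 e2; rewrite -e0 -e1 -e2 !eqxx.
have sp : (size p <= n2.+1)%N.
  apply/leq_sizeP => j hj; rewrite cp.
  rewrite (gtn_eqF hj) (gtn_eqF (ltn_trans h02 hj)) (gtn_eqF (ltn_trans h12 hj)).
  by rewrite !mulr0 !addr0.
have -> : [set x : F | c2 * x ^+ n2 + c1 * x ^+ n1 + c0 * x ^+ n0 == 0]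
    = [set x | root p x].
  by apply/setP => x; rewrite !inE /root /p !hornerE.
exact: roots_card p0 sp.
Qed.

Lemma nzR (F : fieldType) (h2c : 2 \in [pchar F]) (s : F -> F)
  (sD : forall x y, s (x + y) = s x + s y)
  (sM : forall x y, s (x * y) = s x * s y)
  (s1 : s 1 = 1)
  (s4 : forall x, s (s (s (s x))) = x)
  (a Binv A A' : F)
  (hBinv : Binv = s (s (a * s a)))
  (hr2 : s (s A) = 1 + s a)
  (hr1 : s A' = 1 + s a + Binv)
  (hr0 : s a * A' + A + Binv * A = 0) : False.
Proof.
have h2 : 2%:R = 0 :> F := pcharf0 h2c.
have s0 : s 0 = 0 by apply: (addrI (s 0)); rewrite -sD !addr0.
have hBi : Binv = s (s a) * s (s (s a)) by rewrite hBinv !sM.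
have hA : A = 1 + s (s (s a)) by rewrite -[A]s4 hr2 !sD !s1.
have hA' : A' = 1 + a + s a * s (s a) by rewrite -[A']s4 hr1 hBi !sD !sM !s1 !s4.
rewrite hA hA' hBi in hr0.
have g := congr1 (fun x => s (s x)) hr0.
rewrite /= !(sD, sM, s1, s0) !s4 in g.
have key : (a + s (s a)) * (s a + s (s (s a))) ^+ 2 = 0.
  apply: (linc (k1 := 1) (k2 := 1) (k3 := 0) (k4 := 0) hr0 g (erefl (0:F)) (erefl (0:F))).
  ring: h2.
have hac : s (s a) = a.
  move/eqP: key; rewrite mulf_eq0 expf_eq0 /= => /orP [/eqP H|/eqP H].
    by have HH := addC2 h2c H; rewrite {1}HH -HH.
  have H' := addC2 h2c H.
  have := congr1 (fun x => s (s (s x))) H'; rewrite /= !s4 => E.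
  by rewrite -E.
rewrite hac in hr0.
have : (1 : F) = 0.
  apply: (linc (k1 := 1) (k2 := 0) (k3 := 0) (k4 := 0) hr0 (erefl (0:F)) (erefl (0:F)) (erefl (0:F))).
  ring: h2.
by move/eqP; rewrite oner_eq0.
Qed.

Lemma core (F : finFieldType) (q : nat) (A B C D : F) (s : F -> F)
  (hq : (2 <= q)%N) (h2c : 2 \in [pchar F])
  (sX : forall x, s x = x ^+ q)
  (sD : forall x y, s (x + y) = s x + s y)
  (sM : forall x y, s (x * y) = s x * s y)
  (s1 : s 1 = 1)
  (s4 : forall x, s (s (s (s x))) = x)
  (hB0 : B != 0) (hB : s (s B) = B^-1) :
  (#|[set uv : F * F | ((s (s uv.2) + A * uv.1 + B * uv.2 + s uv.1 == 0) &&
      (s (s uv.2) + s (s uv.1) + s uv.2 + C * uv.1 + D * uv.2 == 0))%R]| <= q ^ 3)%N.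
Proof.
set S := [set uv : F * F | _].
have h2 : 2%:R = 0 :> F := pcharf0 h2c.
have s0 : s 0 = 0 by apply: (addrI (s 0)); rewrite -sD !addr0.
have s2X x : s (s x) = x ^+ (q ^ 2) by rewrite !sX -exprM mulnn.
have s3X x : s (s (s x)) = x ^+ (q ^ 3) by rewrite s2X sX -exprM -expnS.
have hBB2 : 1 + B^-1 * B = 0 by rewrite mulVf // (addrr_pchar2 h2c).
have q0 : (0 < q)%N by apply: leq_trans hq.
have q1 : (1 < q)%N by [].
have qq2 : (q < q ^ 2)%N by rewrite -{1}[q]expn1 ltn_exp2l.
have qq3 : (q ^ 2 < q ^ 3)%N by rewrite ltn_exp2l.
have key u v : (u, v) \in S ->
  [/\ s (s (s u)) + s (s A) * s (s u) + B^-1 * s u + B^-1 * A * u = 0,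
      ((s B + s D) * (B + D) + B) * v + (s (s (s u)) + (1 + s B + s D) * s (s u)
         + (s A + s C + s B + s D + 1) * s u + ((s B + s D) * (A + C) + A) * u) = 0 &
      s v + (B + D) * v + (s (s u) + s u + (A + C) * u) = 0].
  rewrite inE /= => /andP [/eqP e1 /eqP e2].
  have se1 := congr1 s e1; rewrite !(sD, sM, s0) in se1.
  have se2 := congr1 s e2; rewrite !(sD, sM, s0) in se2.
  have s2e1 := congr1 (fun x => s (s x)) e1; rewrite /= !(sD, sM, s0) s4 hB in s2e1.
  split.
  - apply: (linc (k1 := 1) (k2 := B^-1) (k3 := v) (k4 := 0) s2e1 e1 hBB2 (erefl (0:F))).
    ring: h2.
  - apply: (linc (k1 := 1) (k2 := 1) (k3 := 1 + s B + s D) (k4 := s B + s D) se1 se2 e1 e2).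
    ring: h2.
  - apply: (linc (k1 := 1) (k2 := 1) (k3 := 0) (k4 := 0) e1 e2 (erefl (0:F)) (erefl (0:F))).
    ring: h2.
have [c0|cn0] := eqVneq ((s B + s D) * (B + D) + B) 0; last first.
  have inj : {in S &, injective (@fst F F)}.
    move=> [u v] [u' v'] /key [_ hT _] /key [_ hT' _] /= eu; subst u'.
    by move: hT; rewrite -hT' => /addIr /(mulfI cn0) ->.
  rewrite -(card_in_imset inj).
  have hP1 := @rootsA _ 1 q (q ^ 2) (q ^ 3)
     (B^-1 * A) (B^-1) (s (s A)) 1
     (ltn_trans q1 (ltn_trans qq2 qq3)) (ltn_trans qq2 qq3) qq3 (oner_neq0 F).
  apply: leq_trans hP1; apply: subset_leq_card; apply/subsetP => x.
  move=> /imsetP [[u v] /key [hP _ _] ->] /=.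
  by rewrite inE -(s3X u) -(s2X u) -(sX u) expr1 mul1r hP.
pose r2 := 1 + s B + s D + s (s A).
pose r1 := s A + s C + s B + s D + 1 + B^-1.
pose r0 := (s B + s D) * (A + C) + A + B^-1 * A.
have hR u v : (u, v) \in S -> r2 * s (s u) + r1 * s u + r0 * u = 0.
  move=> /key [hP hT _]; rewrite /r2 /r1 /r0.
  apply: (linc (k1 := 1) (k2 := 1) (k3 := v) (k4 := 0) hP hT c0 (erefl (0:F))).
  ring: h2.
have nz : ~~ [&& r0 == 0, r1 == 0 & r2 == 0].
  apply/negP => /and3P [/eqP e0 /eqP e1 /eqP e2].
  apply: (@nzR _ h2c s sD sM s1 s4 (B + D) B^-1 A (A + C)).
  - rewrite -hB; congr (s (s _)); rewrite sD mulrC; by rewrite (addC2 h2c c0).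
  - rewrite sD; apply: (addC2 h2c).
    apply: (linc (k1 := 1) (k2 := 0) (k3 := 0) (k4 := 0) e2 (erefl (0:F)) (erefl (0:F)) (erefl (0:F))).
    rewrite /r2; ring: h2.
  - rewrite !sD; apply: (addC2 h2c).
    apply: (linc (k1 := 1) (k2 := 0) (k3 := 0) (k4 := 0) e1 (erefl (0:F)) (erefl (0:F)) (erefl (0:F))).
    rewrite /r1; ring: h2.
  - rewrite sD.
    apply: (linc (k1 := 1) (k2 := 0) (k3 := 0) (k4 := 0) e0 (erefl (0:F)) (erefl (0:F)) (erefl (0:F))).
    rewrite /r0; ring: h2.
set U := [set u : F | (r2 * u ^+ (q ^ 2) + r1 * u ^+ q + r0 * u ^+ 1 == 0)%R].
have hU : (#|U| <= q ^ 2)%N by apply: rootsB => //.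
have inU u v : (u, v) \in S -> u \in U.
  by move=> /hR; rewrite inE -(s2X u) -(sX u) expr1 => ->.
have fib u : (#|[set v | (u, v) \in S]| <= (u \in U) * q)%N.
  case: (boolP (u \in U)) => hu.
    rewrite mul1n.
    have hF := @rootsA _ 0 0 1 q
      0 (s (s u) + s u + (A + C) * u) (B + D) 1
      q0 q0 q1 (oner_neq0 F).
    apply: leq_trans hF; apply: subset_leq_card; apply/subsetP => v.
    rewrite inE => /key [_ _ h3].
    by rewrite inE expr1 expr0 mulr1 mul0r addr0 mul1r -(sX v) h3.
  rewrite mul0n leqn0 cards_eq0; apply/eqP/setP => v; rewrite in_set0 in_set.
  by apply/negbTE; apply: contra hu; exact: inU.
have -> : #|S| = (\sum_(u : F) #|[set v | (u, v) \in S]|)%N.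
  rewrite -sum1_card.
  under [in RHS]eq_bigr do rewrite -sum1dep_card.
  rewrite pair_big_dep /=; apply: eq_bigl => -[u v] /=; by [].
apply: (@leq_trans (\sum_(u : F) ((u \in U) * q)%N)).
  by apply: leq_sum => u _; exact: fib u.
rewrite (eq_bigr (fun u => if u \in U then q else 0%N)); last by move=> u _; case: (u \in U); rewrite ?mul1n ?mul0n.
rewrite -big_mkcond sum_nat_const expnSr.
by apply: leq_mul.
Qed.

Theorem proposition4p3 (h : nat) (F : finFieldType)
  (hF : #|F| = ((2 ^ h) ^ 4)%N) (A B C D : F)
  (hB0 : B != 0) (hB : B ^+ ((2 ^ h) ^ 2)%N = B^-1) :
  (#|Lambda (2 ^ h)%N A B C D| <= (2 ^ h) ^ 3)%N.
Proof.
have h2c : 2 \in [pchar F].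
  by apply: (@card_finPcharP F 2 (h * 4)%N) => //; rewrite hF expnM.
have hpos : (0 < h)%N.
  case: h hF {hB} => [|h'] // hF1.
  have : (1 < #|F|)%N by apply/card_gt1P; exists 0, 1; split => //; rewrite eq_sym oner_neq0.
  by rewrite hF1.
set q := (2 ^ h)%N in hF hB *.
have hq : (2 <= q)%N by rewrite /q -{1}(expn1 2) leq_exp2l.
pose s := fun x : F => x ^+ q.
have sX x : s x = x ^+ q by [].
have qnat : ([pchar F]).-nat q.
  by rewrite (eq_pnat _ (pcharf_eq h2c)) /q pnatX pnat_id.
have sD x y : s (x + y) = s x + s y by rewrite /s exprDn_pchar.
have sM x y : s (x * y) = s x * s y by rewrite /s exprMn.
have s1 : s 1 = 1 by rewrite /s expr1n.
have s4 x : s (s (s (s x))) = x.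
  rewrite /s -!exprM -{2}(expf_card x) hF; congr (x ^+ _).
have hBs : s (s B) = B^-1 by rewrite /s -exprM mulnn.
have -> : Lambda q A B C D = [set uv : F * F | ((s (s uv.2) + A * uv.1 + B * uv.2 + s uv.1 == 0) &&
      (s (s uv.2) + s (s uv.1) + s uv.2 + C * uv.1 + D * uv.2 == 0))%R].
  by apply/setP => uv; rewrite !inE /s -!exprM mulnn.
exact: core hq h2c sX sD sM s1 s4 hB0 hBs.
Qed.
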